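(* Let $\mathcal{Q}$ be a set of generalized quantifiers of width $1$, $d\in\mathbb{N}$, and $(\mathfrak{M},w)$, $(\mathfrak{N},v)$ pointed Kripke models. If $\mathfrak{N},v\Vdash\varphi^{\mathcal{Q},d}_{\mathfrak{M}\sqcup\mathfrak{N},w}$, then $\mathfrak{M},w\sim^d_{\mathcal{Q}}\mathfrak{N},v$.
   Context: Kripke models: fix a finite set $\Phi$ of proposition symbols. A Kripke model is $\mathfrak{M}=(V,E,\ell)$ with $V$ a finite non-empty set, $E\subseteq V\times V$, and $\ell:V\to\mathcal{P}(\Phi)$. For $u\in V$, $N(u)=\{u'\mid (u,u')\in E\}$. A pointed Kripke model is $(\mathfrak{M},w)$ with $w\in V$; $\mathfrak{M}\sqcup\mathfrak{N}$ is the disjoint union. A generalized quantifier (of width 1) is a class $Q$ of pairs $(D,P)$ with $P\subseteq D$, closed under isomorphism; $\mathfrak{M},u\Vdash\langle Q\rangle\varphi$ iff $(N(u),\{u'\in N(u)\mid \mathfrak{M},u'\Vdash\varphi\})\in Q$. $\mathrm{PL}(\mathcal{Q})$: formulas $\varphi::=\bot\mid p\mid\neg\varphi\mid\varphi\wedge\varphi\mid\varphi\vee\varphi\mid\langle Q\rangle\varphi$, usual Boolean semantics, $\mathfrak{M},u\Vdash p$ iff $p\in\ell(u)$; $\equiv^d_{\mathrm{PL}(\mathcal{Q})}$ is indistinguishability by formulas of modal depth $\le d$. Types: for a Kripke model $\mathfrak{K}$ and $u\in\mathfrak{K}$, $\varphi^{\mathcal{Q},0}_{\mathfrak{K},u}=\bigwedge\{p\mid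 \mathfrak{K},u\Vdash p\}\wedge\bigwedge\{\neg p\mid \mathfrak{K},u\Vdash\neg p\}$, and $\varphi^{\mathcal{Q},d+1}_{\mathfrak{K},u}$ is the conjunction of $\varphi^{\mathcal{Q},0}_{\mathfrak{K},u}$, of all $\langle Q\rangle\bigvee_{\psi\in C}\psi$ true at $(\mathfrak{K},u)$, and of all $\neg\langle Q\rangle\bigvee_{\psi\in C}\psi$ true at $(\mathfrak{K},u)$, where $Q$ ranges over $\mathcal{Q}$ and $C$ over subsets of $\{\varphi^{\mathcal{Q},d}_{\mathfrak{K},u'}\mid u'\in\mathfrak{K}\}$ (infinitary conjunctions allowed if $\mathcal{Q}$ is infinite; satisfied iff every conjunct is). $\mathcal{Q}$-bisimulation game on $(\mathfrak{M},w)$, $(\mathfrak{N},v)$: two pebbles start on $w$ and $v$; Player 1 starts as attacker, Player 2 as defender (roles may swap). At the start of a round the pebbles lie on nodes $a,b$ of $\mathfrak{M}\sqcup\mathfrak{N}$. (i) The attacker selects one pebble, say on $a$, a $Q\in\mathcal{Q}$, and $X\subseteq N(a)$ with $(N(a),X)\in Q$; then chooses $P\subseteq N(b)$. The defender may contest $P$ by placing one pebble on a node of $P$ and the other on a node of $N(a)$; a new round starts. (ii) Otherwise the defender chooses $X'\subseteq N(b)$ with $(N(b),X')\in Q$ and $P\subseteq X'$. (iii) The attacker either moves one pebble onto a node of $N(b)\setminus X'$ and the other onto a node of $X$ and the players swap roles, or moves one pebble onto a node of $X'$, after which the defender moves the other onto a node of $X\cup P$; a new round starts. (iv) Whenever $X$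 (resp. $X'$) is chosen, the other player may contest it by moving one pebble onto a node of that set and the other onto a node of $N(a)\setminus X$ (resp. $N(b)\setminus X'$), then taking the role of defender; a new round starts. The current attacker wins if at the start of a round the pebbled nodes disagree on some proposition symbol; a player who must choose a subset but cannot loses; infinite plays are won by Player 2. In the $d$-round game Player 2 wins if Player 1 has not won after $d$ rounds; $\mathfrak{M},w\sim^d_{\mathcal{Q}}\mathfrak{N},v$ means Player 2 has a winning strategy in it. *)

(* Defs.v *)
From mathcomp Require Import all_boot.
Set Implicit Arguments.
Unset Strict Implicit.
Unset Printing Implicit Defensive.

(* V is a finite type (non-emptiness is automatic for pointed models). *)
Record kripke (Phi : finType) := Kripke {
  kV :> finType;
  kE : rel kV;
  klab : kV -> {set Phi} }.
Arguments kE {Phi} k _ _.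
Arguments klab {Phi} k _.

Definition nbh (Phi : finType) (M : kripke Phi) (u : M) : {set M} := [set y | kE M u y].

Definition dunion (Phi : finType) (M N : kripke Phi) : kripke Phi :=
  @Kripke Phi (M + N)%type
    (fun x y => match x, y with
                | inl a, inl b => kE M a b
                | inr a, inr b => kE N a b
                | _, _ => false end)
    (fun x => match x with inl a => klab M a | inr b => klab N b end).

(* A class of pairs (D, P) with P ⊆ D (P given as a predicate on D),
   closed under isomorphism (which includes extensional equality of P). *)
Record gquant := GQuant {
  gq_mem : forall D : Type, (D -> Prop) -> Prop;
  gq_iso : forall (D D' : Type) (f : D -> D') (g : D' -> D),
      cancel f g -> cancel g f ->
      forall (P : D -> Prop) (P' : D' -> Prop),
      (forall x, P' (f x) <-> P x) -> gq_mem P -> gq_mem P' }.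

Inductive form (Phi : finType) : Type :=
| fBot
| fVar (p : Phi)
| fNeg (phi : form Phi)
| fAnd (phi psi : form Phi)
| fOr (phi psi : form Phi)
| fMod (Q : gquant) (phi : form Phi)
| fBigAnd (I : Type) (F : I -> form Phi)
| fBigOr (I : Type) (F : I -> form Phi).

Fixpoint sat (Phi : finType) (M : kripke Phi) (phi : form Phi) : M -> Prop :=
  match phi with
  | fBot => fun _ => False
  | fVar p => fun u => p \in klab M u
  | fNeg f => fun u => ~ @sat Phi M f u
  | fAnd f g => fun u => @sat Phi M f u /\ @sat Phi M g u
  | fOr f g => fun u => @sat Phi M f u \/ @sat Phi M g u
  | fMod Q f => fun u => @gq_mem Q {y : M | kE M u y} (fun y => @sat Phi M f (val y))
  | @fBigAnd _ J F => fun u => forall i : J, @sat Phi M (F i) u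
  | @fBigOr _ J F => fun u => exists i : J, @sat Phi M (F i) u
  end.

Definition type0 (Phi : finType) (K : kripke Phi) (u : K) : form Phi :=
  fAnd (fBigAnd (fun p : {p : Phi | p \in klab K u} => fVar (val p)))
       (fBigAnd (fun p : {p : Phi | p \notin klab K u} => fNeg (fVar (val p)))).

(* <Q> \/ C, where C = { phi^{d}_{K,u'} | u' in S } ; every subset C of
   the set of depth-d types arises this way from some S. *)
Definition modC (Phi : finType) (K : kripke Phi) (Q : gquant) (S : {set K})
  (ty : K -> form Phi) : form Phi :=
  fMod Q (fBigOr (fun u' : {u' : K | u' \in S} => ty (val u'))).

Fixpoint qtype (Phi : finType) (QS : gquant -> Prop) (d : nat) (K : kripke Phi) (u : K)
  : form Phi :=
  match d with
  | 0 => type0 u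
  | d'.+1 =>
    let ty := fun u' : K => @qtype Phi QS d' K u' in
    fAnd (type0 u)
      (fAnd
        (fBigAnd (fun i : {i : {Q : gquant | QS Q} * {set K} |
                             @sat _ K (modC (sval i.1) i.2 ty) u} =>
                    modC (sval (sval i).1) (sval i).2 ty))
        (fBigAnd (fun i : {i : {Q : gquant | QS Q} * {set K} |
                             @sat _ K (fNeg (modC (sval i.1) i.2 ty)) u} =>
                    fNeg (modC (sval (sval i).1) (sval i).2 ty))))
  end.

(* Choice made by a player: if that player is Player 2, Player 2 needs SOME
   good choice; otherwise (Player 1) ALL choices must be good for Player 2.
   An empty set of options makes Player 2 lose (resp. win), i.e. a player
   who must choose but cannot loses. *)
Definition choose (isP2 : bool) (T : Type) (P : T -> Prop) : Prop :=
  if isP2 then exists t, P t else forall t, P t.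
Definition choose2 (isP2 : bool) (A B : Prop) : Prop :=
  if isP2 then A \/ B else A /\ B.

(* p2wins QS r att2 a b : Player 2 has a winning strategy in the game with
   r remaining rounds, pebbles on a and b (nodes of the disjoint union K),
   where att2 = true iff Player 2 is currently the attacker. *)
Fixpoint p2wins (Phi : finType) (QS : gquant -> Prop) (K : kripke Phi)
  (r : nat) (att2 : bool) (a0 b0 : K) {struct r} : Prop :=
  if klab K a0 != klab K b0 then is_true att2 (* current attacker wins *) else
  match r with
  | 0 => True
  | r'.+1 =>
    let W := @p2wins Phi QS K r' in
    (* attacker selects a pebble: it lies on a, the other on b *)
    choose att2 (fun s : bool => let a := if s then a0 else b0 in let b := if s then b0 else a0 in
    (* (i) attacker selects Q and X ⊆ N(a) with (N(a),X) ∈ Q *)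
    choose att2 (fun Q : {Q : gquant | QS Q} =>
    choose att2 (fun X : {X : {set K} | X \subset nbh a /\
                    @gq_mem (sval Q) {y : K | kE K a y} (fun y => val y \in X)} =>
    choose2 (~~ att2)
      (* (iv) defender contests X *)
      (choose (~~ att2) (fun x : {x : K | x \in sval X} =>
       choose (~~ att2) (fun y : {y : K | y \in nbh a :\: sval X} => W att2 (val x) (val y))))
      (* attacker chooses P ⊆ N(b) *)
      (choose att2 (fun P : {P : {set K} | P \subset nbh b} =>
       choose2 (~~ att2)
         (* defender contests P *)
         (choose (~~ att2) (fun x : {x : K | x \in sval P} =>
          choose (~~ att2) (fun y : {y : K | y \in nbh a} => W att2 (val x) (val y))))
         (* (ii) defender chooses X' ⊆ N(b), (N(b),X') ∈ Q, P ⊆ X' *)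
         (choose (~~ att2) (fun X' : {X' : {set K} | [/\ X' \subset nbh b,
                    @gq_mem (sval Q) {y : K | kE K b y} (fun y => val y \in X')
                    & sval P \subset X']} =>
          choose2 att2
            (* (iv) attacker contests X' and becomes defender *)
            (choose att2 (fun x : {x : K | x \in sval X'} =>
             choose att2 (fun y : {y : K | y \in nbh b :\: sval X'} => W (~~ att2) (val x) (val y))))
            (choose2 att2
              (* (iii) first option: N(b)\X' and X, roles swap *)
              (choose att2 (fun y : {y : K | y \in nbh b :\: sval X'} =>
               choose att2 (fun x : {x : K | x \in sval X} => W (~~ att2) (val y) (val x))))
              (* (iii) second option: X', then defender answers in X ∪ P *)
              (choose att2 (fun y : {y : K | y \in sval X'} =>
               choose (~~ att2) (fun x : {x : K | x \in sval X :|: sval P} => W att2 (val y) (val x))))))))))))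
  end.

Definition bisim_d (Phi : finType) (QS : gquant -> Prop) (d : nat)
  (M : kripke Phi) (w : M) (N : kripke Phi) (v : N) : Prop :=
  p2wins QS (K := dunion M N) d false (inl w) (inr v).

(* Main.v *)
From Stdlib Require Import Classical ClassicalEpsilon.
Require Import Defs.
From mathcomp Require Import all_boot.

Set Implicit Arguments.
Unset Strict Implicit.

Definition pb (P : Prop) : bool := if excluded_middle_informative P then true else false.
Lemma pbP (P : Prop) : reflect P (pb P).
Proof. rewrite /pb; case: excluded_middle_informative => h; by constructor. Qed.

Lemma gq_ext (Q : gquant) (D : Type) (P P' : D -> Prop) :
  (forall x, P x <-> P' x) -> gq_mem Q P -> gq_mem Q P'.
Proof.
move=> h; apply: (@gq_iso Q D D (fun x => x) (fun x => x)) => // x.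
by split => /h.
Qed.

Section G.
Variables (Phi : finType) (QS : gquant -> Prop) (K : kripke Phi).

Definition E r (a b : K) := sat (qtype QS r a) b.
Definition TS r (S : {set K}) (y : K) := exists i : {u' | u' \in S}, E r (val i) y.

Lemma T0 (a b : K) : sat (type0 a) b <-> klab K a = klab K b.
Proof.
split.
- move=> [H1 H2]; apply/setP => p.
  case: (boolP (p \in klab K a)) => h.
  + symmetry; exact: (H1 (exist _ p h)).
  + apply/esym/negbTE/negP; exact: (H2 (exist _ p h)).
- move=> e; split => -[p hp] /=; rewrite -e //; exact/negP.
Qed.

Lemma ES r (a b : K) : E r.+1 a b <-> klab K a = klab K b /\
  forall Q, QS Q -> forall S, (gq_mem Q (fun y : {y | kE K a y} => TS r S (val y)) <->
                               gq_mem Q (fun y : {y | kE K b y} => TS r S (val y))).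
Proof.
rewrite /E /=; split.
- move=> [h0 [hp hn]]; split; first by apply/T0.
  move=> Q hQ S; split => h.
  + exact: (hp (exist _ (exist _ Q hQ, S) h)).
  + apply: NNPP => hn'; exact: (hn (exist _ (exist _ Q hQ, S) hn') h).
- move=> [h0 h]; split; first by apply/T0.
  split.
  + move=> [[[Q hQ] S] hs] /=; exact: (proj1 (h Q hQ S) hs).
  + move=> [[[Q hQ] S] hs] /= hb; apply: hs; exact: (proj2 (h Q hQ S) hb).
Qed.

Lemma Erefl r a : E r a a.
Proof.
case: r => [|r]; first by apply/T0.
apply/ES; split => // Q _ S; exact: iff_refl.
Qed.

Lemma Esym r a b : E r a b -> E r b a.
Proof.
case: r => [|r]; first by move/T0 => e; apply/T0.
move/ES => [e h]; apply/ES; split => // Q hQ S; exact: iff_sym (h Q hQ S).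
Qed.

Lemma Etrans r a b c : E r a b -> E r b c -> E r a c.
Proof.
case: r => [|r]; first by move/T0 => e /T0 e'; apply/T0; rewrite e.
move/ES => [e h] /ES [e' h']; apply/ES; split; first by rewrite e.
move=> Q hQ S; exact: iff_trans (h Q hQ S) (h' Q hQ S).
Qed.

Lemma TS_E r S x y : TS r S x -> E r x y -> TS r S y.
Proof. move=> [i hi] h; exists i; exact: Etrans hi h. Qed.

Lemma TS_in r (S : {set K}) x : x \in S -> TS r S x.
Proof. move=> h; exists (exist _ x h); exact: Erefl. Qed.

Lemma game r : (forall a b : K, E r a b -> p2wins QS r false a b) /\
               (forall a b : K, ~ E r a b -> p2wins QS r true a b).
Proof.
elim: r => [|r [IHd IHa]].
- split => a b h /=.
  + by move/T0: h => ->; rewrite eqxx.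
  + case: eqP => // e; exfalso; apply: h; exact/T0.
- split.
  + move=> a b hE.
    have [e _] := proj1 (ES _ _ _) hE.
    rewrite /= e eqxx /=.
    move=> t.
    have hE' : E r.+1 (if t then a else b) (if t then b else a)
      by case: t; [exact: hE | exact: Esym].
    move: (if t then a else b) (if t then b else a) hE' => a' b' hE'.
    have [_ hq] := proj1 (ES _ _ _) hE'.
    move=> [Q hQ] [X [hXs hXq]] /=.
    case: (classic (exists x y, x \in X /\ y \in nbh a' :\: X /\ E r x y))
      => [[x [y [hx [hy hxy]]]]|nX].
      by left; exists (exist _ x hx), (exist _ y hy); exact: IHd.
    right => -[P hP] /=.
    case: (classic (exists x y, x \in P /\ y \in nbh a' /\ E r x y))
      => [[x [y [hx [hy hxy]]]]|nP].
      by left; exists (exist _ x hx), (exist _ y hy); exact: IHd.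
    right.
    pose S := X :|: P.
    have hXT : forall y : {y | kE K a' y}, val y \in X <-> TS r S (val y).
      move=> [y hy] /=; split; first by move=> h; apply: TS_in; rewrite inE h.
      move=> [[s hs] /= hsy]; apply: NNPP => hyX.
      move: hs; rewrite inE => /orP [hs|hs].
      - apply: nX; exists s, y; split=>//; split=>//.
        rewrite !inE; apply/andP; split; [exact/negP | exact: hy].
      - apply: nP; exists s, y; split=>//; split=>//; by rewrite inE.
    have hb : gq_mem Q (fun y : {y | kE K b' y} => TS r S (val y)).
      apply/(hq Q hQ S); exact: gq_ext hXq.
    pose X' := [set y | pb (kE K b' y /\ TS r S y)].
    have memX' y : y \in X' <-> kE K b' y /\ TS r S y.
      rewrite inE; exact: iff_sym (rwP (pbP _)).
    have hX's : X' \subset nbh b'.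
      by apply/subsetP => y /memX' [h _]; rewrite inE.
    have hX'q : gq_mem Q (fun y : {y | kE K b' y} => val y \in X').
      apply: gq_ext hb => -[y hy] /=; split => [h|]; first by apply/memX'.
      by move/memX' => [].
    have hPX' : P \subset X'.
      apply/subsetP => y hy; apply/memX'; split.
      + by move/subsetP: hP => /(_ y hy); rewrite inE.
      + by apply: TS_in; rewrite inE hy orbT.
    exists (exist _ X' (And3 hX's hX'q hPX')); split; [|split].
    * move=> [x hx] [y hy] /=; apply: IHa => hxy.
      move: hy; rewrite inE => /andP [hyX' hyb].
      apply: (negP hyX'); apply/memX'; split; first by move: hyb; rewrite inE.
      exact: TS_E (proj2 (proj1 (memX' x) hx)) hxy.
    * move=> [y hy] [x hx] /=; apply: IHa => hyx.
      move: hy; rewrite inE => /andP [hyX' hyb].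
      apply: (negP hyX'); apply/memX'; split; first by move: hyb; rewrite inE.
      by apply: TS_E (Esym hyx); apply: TS_in; rewrite inE hx.
    * move=> [y hy] /=.
      have [[s hs] /= hsy] := proj2 (proj1 (memX' y) hy).
      exists (exist _ s hs); exact: IHd (Esym hsy).
  + move=> a b hnE.
    case: (eqVneq (klab K a) (klab K b)) => e; last by rewrite /= e.
    have [Q [hQ [S hS]]] : exists Q, QS Q /\ exists S,
        ~ (gq_mem Q (fun y : {y | kE K a y} => TS r S (val y)) <->
           gq_mem Q (fun y : {y | kE K b y} => TS r S (val y))).
      apply: NNPP => hn; apply: hnE; apply/ES; split => // Q hQ S.
      apply: NNPP => h; apply: hn; exists Q; split => //; exists S; exact: h.
    have H : (gq_mem Q (fun y : {y | kE K a y} => TS r S (val y)) /\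
              ~ gq_mem Q (fun y : {y | kE K b y} => TS r S (val y))) \/
             (gq_mem Q (fun y : {y | kE K b y} => TS r S (val y)) /\
              ~ gq_mem Q (fun y : {y | kE K a y} => TS r S (val y))) by tauto.
    rewrite /= e eqxx /=.
    clear hnE hS e.
    case: H => [[hA hB]|[hA hB]];
      [exists true; move: a b hA hB | exists false; move: b a hA hB]
      => u u' hA hB /=.
    all: pose X := [set y | pb (kE K u y /\ TS r S y)].
    all: have memX y : y \in X <-> kE K u y /\ TS r S y
      by rewrite inE; exact: iff_sym (rwP (pbP _)).
    all: have hXs : X \subset nbh u
      by apply/subsetP => y /memX [h _]; rewrite inE.
    all: have hXq : gq_mem Q (fun y : {y | kE K u y} => val y \in X)
      by apply: gq_ext hA => -[y hy] /=; split => [h|];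
        [apply/memX | move/memX => []].
    all: exists (exist _ Q hQ); exists (exist _ X (conj hXs hXq)) => /=; split.
    all: try (move=> [x hx] [y hy] /=; apply: IHa => hxy;
      move: hy; rewrite inE => /andP[hyX hyu]; apply: (negP hyX); apply/memX;
      split; [by move: hyu; rewrite inE
             | exact: TS_E (proj2 (proj1 (memX x) hx)) hxy]).
    all: pose P := [set y | pb (kE K u' y /\ TS r S y /\
                                forall x, kE K u x -> ~ E r y x)].
    all: have memP y : y \in P <-> kE K u' y /\ TS r S y /\
                                forall x, kE K u x -> ~ E r y x
      by rewrite inE; exact: iff_sym (rwP (pbP _)).
    all: have hPs : P \subset nbh u'
      by apply/subsetP => y /memP [h _]; rewrite inE.
    all: exists (exist _ P hPs) => /=; split.
    all: try (move=> [x hx] [y hy] /=; apply: IHa;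
      have [_ [_ h]] := proj1 (memP x) hx; apply: h; by move: hy; rewrite inE).
    all: move=> [X' [hX's hX'q hPX']] /=.
    all: have [[y [hy hny]]|[y [hy hTy]]] :
        (exists y, y \in X' /\ ~ TS r S y) \/
        (exists y, y \in nbh u' :\: X' /\ TS r S y)
      by apply: NNPP => hn; apply: hB; apply: gq_ext hX'q => -[y hy] /=;
        split => h; apply: NNPP => hT; apply: hn;
        [left; exists y | right; exists y; split => //;
         rewrite !inE hy andbT; exact/negP].
    all: try (right; right; exists (exist _ y hy) => -[x hx] /=;
      apply: IHa => hyx; apply: hny; apply: TS_E (Esym hyx);
      move: hx; rewrite inE => /orP[h|h];
      [exact: proj2 (proj1 (memX x) h) | exact: proj1 (proj2 (proj1 (memP x) h))]).
    all: right; left; exists (exist _ y hy).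
    all: have := hy; rewrite inE => /andP[hyX' hyu].
    all: have hyP : ~ (forall x, kE K u x -> ~ E r y x)
      by move=> h; apply: (negP hyX'); apply: (subsetP hPX'); apply/memP;
        split; [by move: hyu; rewrite inE | split].
    all: have [x [hxu hyx]] : exists x, kE K u x /\ E r y x
      by apply: NNPP => hn; apply: hyP => x hx hyx; apply: hn; exists x.
    all: have hxX : x \in X by apply/memX; split => //; exact: TS_E hTy hyx.
    all: exists (exist _ x hxX); exact: IHd.
Qed.
End G.

Section T.
Variables (Phi : finType) (M N : kripke Phi) (v : N).

Definition fwdN (y : {y : N | kE N v y}) : {y : dunion M N | kE (dunion M N) (inr v) y} :=
  exist _ (inr (proj1_sig y)) (proj2_sig y).

Definition bwdN (y : {y : dunion M N | kE (dunion M N) (inr v) y}) : {y : N | kE N v y} :=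
  match y with
  | exist (inr n) h => exist _ n h
  | exist (inl m) h => match Bool.diff_false_true h with end
  end.

Lemma fwdK : cancel fwdN bwdN. Proof. by move=> [y h]. Qed.
Lemma bwdK : cancel bwdN fwdN.
Proof. by case=> -[m|n] h //=. Qed.
End T.

Lemma sat_inr (Phi : finType) (M N : kripke Phi) (phi : form Phi) :
  forall v : N, sat (M:=N) phi v <-> sat (M:=dunion M N) phi (inr v).
Proof.
elim: phi => //=.
- move=> f IH v; split => h h'; apply: h; exact/IH.
- move=> f IHf g IHg v; split=> -[h1 h2]; split; by [apply/IHf | apply/IHg].
- move=> f IHf g IHg v; split=> -[h|h]; by [left; apply/IHf | right; apply/IHg].
- move=> Q f IH v.
  have H1 : forall y, sat (M:=dunion M N) f (val (@fwdN Phi M N v y)) <-> sat (M:=N) f (val y).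
    move=> y; exact: iff_sym (IH _).
  have H2 : forall y, sat (M:=N) f (val (@bwdN Phi M N v y)) <-> sat (M:=dunion M N) f (val y).
    move=> -[[m|n] hy] //=; exact: (IH n).
  split => h.
  + exact: (gq_iso (@fwdK Phi M N v) (@bwdK Phi M N v) H1 h).
  + exact: (gq_iso (@bwdK Phi M N v) (@fwdK Phi M N v) H2 h).
- move=> I F IH v; split => h i; exact/IH.
- move=> I F IH v; split => -[i h]; exists i; exact/IH.
Qed.

Theorem lemmaB3 (Phi : finType) (QS : gquant -> Prop) (d : nat)
  (M : kripke Phi) (w : M) (N : kripke Phi) (v : N) :
  @sat Phi N (qtype QS d (K := dunion M N) (inl w)) v ->
  bisim_d QS d w v.
Proof.
move=> h; apply: (proj1 (game QS (dunion M N) d)).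
exact: (proj1 (sat_inr _ _ _)).
Qed.
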